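(* For every $k\in\mathbb N$ and $\mu\in\{0,\dots,L-1\}$, let $Q$ be a matrix whose columns form an orthonormal basis of $\operatorname{range}(W_{k,\mu+1})$. Then $$f(v_{k,\mu+1})-f(v_{k,\mu})=-\frac{1}{2\|b\|^2}\big\langle Q(Q^TAQ)^{-1}Q^Tr_{k,\mu},\,r_{k,\mu}\big\rangle .$$
   Context: Let $\mathcal V=\bigotimes_{\nu=1}^d\mathbb R^{m_\nu}\cong\mathbb R^N$ with the Euclidean inner product $\langle\cdot,\cdot\rangle$ and norm $\|\cdot\|$. Let $A\in\mathbb R^{N\times N}$ be symmetric positive definite, $b\in\mathcal V\setminus\{0\}$, $f(v)=\frac{1}{\|b\|^2}(\frac12\langle Av,v\rangle-\langle b,v\rangle)$. Let $L\ge d$, $P_1,\dots,P_L$ finite-dimensional real inner product spaces, $P=P_1\times\dots\times P_L$, $U:P\to\mathcal V$ multilinear, $F=f\circ U$. For $\mathbf p\in P$, $W_{\mu,\mathbf p^{[\mu]}}:P_\mu\to\mathcal V$ is $q\mapsto U(p_1,\dots,p_{\mu-1},q,p_{\mu+1},\dots,p_L)$; $X^T$ transpose, $X^+$ pseudoinverse (w.r.t. orthonormal bases). ALS: choose $\mathbf p_1=(p_1^1,\dots,p_L^1)\in P$; for $k=1,2,\dots$ and $\mu=1,\dots,L$ in order, $W_{k,\mu}:=W_{\mu,(p_1^{k+1},\dots,p_{\mu-1}^{k+1},p_{\mu+1}^k,\dots,p_L^k)}$ and $p_\mu^{k+1}:=(W_{k,\mu}^TAW_{k,\mu})^+W_{k,\mu}^Tb$.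 For $\mu\in\{0,\dots,L\}$ put $v_{k,\mu}=U(p_1^{k+1},\dots,p_\mu^{k+1},p_{\mu+1}^k,\dots,p_L^k)$ and $r_{k,\mu}=b-Av_{k,\mu}$. *)

(* Defs.v *)
From HB Require Import structures.
From mathcomp Require Import all_boot all_order all_algebra.
From mathcomp Require Import reals.
From Stdlib Require Import ClassicalEpsilon.
Set Implicit Arguments. Unset Strict Implicit. Unset Printing Implicit Defensive.
Import Order.TTheory GRing.Theory Num.Theory.
Local Open Scope ring_scope.

Section ALS.
Variable R : realType.

Definition dotv (N : nat) (x y : 'cV[R]_N) : R := (x^T *m y) 0 0.

Definition spd (N : nat) (A : 'M[R]_N) : Prop :=
  A^T = A /\ forall x : 'cV[R]_N, x != 0 -> 0 < dotv x (A *m x).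

Definition fq (N : nat) (A : 'M[R]_N) (b v : 'cV[R]_N) : R :=
  (dotv b b)^-1 * (2^-1 * dotv (A *m v) v - dotv b v).

Definition penrose (m n : nat) (X : 'M[R]_(m, n)) (Y : 'M[R]_(n, m)) : Prop :=
  [/\ X *m Y *m X = X, Y *m X *m Y = Y,
      (X *m Y)^T = X *m Y & (Y *m X)^T = Y *m X].

Definition pinv (m n : nat) (X : 'M[R]_(m, n)) : 'M[R]_(n, m) :=
  epsilon (inhabits 0) (penrose X).

(* Parameter space P = P_1 x ... x P_L, with P_i identified with R^(n i)
   through orthonormal bases. *)
Definition param (L : nat) (n : 'I_L -> nat) := forall i : 'I_L, 'cV[R]_(n i).

Definition multilinear (L N : nat) (n : 'I_L -> nat)
    (U : param n -> 'cV[R]_N) : Prop :=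
  forall (p : param n) (mu : 'I_L),
    linear (fun q : 'cV[R]_(n mu) => U (dfwith p q)).

(* Matrix of W_{mu,p^[mu]} : q |-> U(p_1,..,q,..,p_L). *)
Definition Wmat (L N : nat) (n : 'I_L -> nat) (U : param n -> 'cV[R]_N)
    (p : param n) (mu : 'I_L) : 'M[R]_(N, n mu) :=
  \matrix_(i, j) U (dfwith p (delta_mx j 0 : 'cV[R]_(n mu))) i 0.

(* (p_1^{k+1},...,p_mu^{k+1}, p_{mu+1}^k, ..., p_L^k), 0-based: the first
   mu coordinates are taken from iterate k+1. *)
Definition mixp (L : nat) (n : 'I_L -> nat) (p : nat -> param n)
    (k mu : nat) : param n :=
  fun i => if (i < mu)%N then p k.+1 i else p k i.

(* ALS iteration (components updated in order mu = 1..L, 0-based here). *)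
Definition ALS_iter (L N : nat) (n : 'I_L -> nat) (U : param n -> 'cV[R]_N)
    (A : 'M[R]_N) (b : 'cV[R]_N) (p : nat -> param n) : Prop :=
  forall k : nat, (1 <= k)%N -> forall mu : 'I_L,
    let W := Wmat U (mixp p k mu) mu in
    p k.+1 mu = pinv (W^T *m A *m W) *m W^T *m b.

End ALS.

(* Main.v *)
Require Import Defs.
From HB Require Import structures.
From mathcomp Require Import all_boot all_order all_algebra.
From mathcomp Require Import reals.
From mathcomp Require Import ring.
From Stdlib Require Import ClassicalEpsilon FunctionalExtensionality.
Import Order.TTheory GRing.Theory Num.Theory.
Local Open Scope ring_scope.

Section Helpers.
Variable R : realType.

Lemma lin_sum0 m N (f : 'cV[R]_m -> 'cV[R]_N) : linear f -> f 0 = 0.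
Proof.
move=> Hf; have H := Hf 1 0 0; rewrite scaler0 addr0 scale1r in H.
have : f 0 + f 0 - f 0 = f 0 - f 0 by rewrite -H.
by rewrite addrK subrr.
Qed.

Lemma lin_sum m N (f : 'cV[R]_m -> 'cV[R]_N) (I : Type) (r : seq I)
  (a : I -> R) (e : I -> 'cV[R]_m) : linear f ->
  f (\sum_(j <- r) a j *: e j) = \sum_(j <- r) a j *: f (e j).
Proof.
move=> Hf; elim: r => [|j r IH]; first by rewrite !big_nil lin_sum0.
by rewrite !big_cons Hf IH.
Qed.

Lemma Wmat_mul L N (n : 'I_L -> nat) (U : param R n -> 'cV[R]_N)
  (p : param R n) (mu : 'I_L) (q : 'cV[R]_(n mu)) :
  multilinear U -> U (dfwith p q) = Wmat U p mu *m q.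
Proof.
move=> Hml; have Hf := Hml p mu.
rewrite {1}(matrix_sum_delta q).
under eq_bigr => j _ do rewrite big_ord1.
have H := @lin_sum _ _ _ _ (index_enum 'I_(n mu)) (fun j => q j ord0) (fun j => delta_mx j ord0) Hf; rewrite /= in H; rewrite H.
apply/matrixP => i l; rewrite (ord1 l) !mxE summxE.
by apply: eq_bigr => j _; rewrite !mxE mulrC.
Qed.

Lemma dfwith_self L (n : 'I_L -> nat) (f : param R n) (mu : 'I_L) :
  dfwith f (f mu) = f.
Proof.
apply: functional_extensionality_dep => i.
by case: (dfwithP f (f mu) i).
Qed.

Lemma mixpS L (n : 'I_L -> nat) (p : nat -> param R n) k (mu : 'I_L) :
  mixp p k mu.+1 = dfwith (mixp p k mu) (p k.+1 mu).
Proof.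
apply: functional_extensionality_dep => i.
case: (dfwithP (mixp p k mu) (p k.+1 mu) i) => [|j Hj].
  by rewrite /mixp ltnSn.
rewrite /mixp ltnS leq_eqVlt.
by have -> : (j == mu :> nat) = false by apply/negbTE; rewrite eq_sym.
Qed.

Lemma dotvC N (x y : 'cV[R]_N) : dotv x y = dotv y x.
Proof. by rewrite /dotv -[y in LHS]trmxK -trmx_mul mxE. Qed.

Lemma dotvMl N M (X : 'M[R]_(N, M)) x y : dotv (X *m x) y = dotv x (X^T *m y).
Proof. by rewrite /dotv trmx_mul mulmxA. Qed.

Lemma dotvBl N (x y z : 'cV[R]_N) : dotv (x - y) z = dotv x z - dotv y z.
Proof. by rewrite /dotv (linearB (@trmx R _ _)) /= mulmxBl !mxE. Qed.

Lemma dotvBr N (x y z : 'cV[R]_N) : dotv z (x - y) = dotv z x - dotv z y.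
Proof. by rewrite /dotv mulmxBr !mxE. Qed.

Lemma sqsum0 n (x : 'rV[R]_n) : (x *m x^T) 0 0 = 0 -> x = 0.
Proof.
rewrite mxE => H; apply/rowP => j; rewrite mxE.
have H2 : forall i : 'I_n, predT i -> 0 <= x 0 i * x^T i 0.
  by move=> i _; rewrite mxE -expr2 sqr_ge0.
have := @psumr_eq0P R _ predT (fun j => x 0 j * x^T j 0) H2 H j isT.
by rewrite mxE => /eqP; rewrite mulf_eq0 orbb => /eqP.
Qed.

End Helpers.

Theorem mainTheorem7 (R : realType) (d : nat) (m : 'I_d -> nat) (N L : nat)
    (HN : N = (\prod_(nu < d) m nu)%N) (HLd : (d <= L)%N)
    (A : 'M[R]_N) (b : 'cV[R]_N) (n : 'I_L -> nat)
    (U : param R n -> 'cV[R]_N) (p : nat -> param R n) :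
  spd A -> b != 0 -> multilinear U -> ALS_iter U A b p ->
  forall (k : nat), (1 <= k)%N -> forall (mu : 'I_L),
    let W := Wmat U (mixp p k mu) mu in
    let v := fun j : nat => U (mixp p k j) in
    let r := b - A *m v mu in
    forall (s : nat) (Q : 'M[R]_(N, s)),
      Q^T *m Q = 1%:M -> (Q^T == W^T)%MS ->
      fq A b (v mu.+1) - fq A b (v mu) =
        - ((2 * dotv b b)^-1 *
           dotv (Q *m invmx (Q^T *m A *m Q) *m Q^T *m r) r).
Proof.
move=> [AT Apos] b0 Hml Hals k k1 mu W v r s Q QQ /andP[QW WQ].
have [X HX] := submxP QW.
have [Y HY] := submxP WQ.
set C := Y^T; set D := X^T.
have WQC : W = Q *m C by rewrite -[W]trmxK HY trmx_mul trmxK.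
have QWD : Q = W *m D by rewrite -[Q]trmxK HX trmx_mul trmxK.
have CD : C *m D = 1%:M.
  by rewrite -QQ {2}QWD WQC !mulmxA QQ mul1mx.
have [G HG] : {G | Q^T *m A *m Q = G} by exists (Q^T *m A *m Q).
rewrite HG.
have GT : G^T = G by rewrite -HG !trmx_mul trmxK AT mulmxA.
have Gunit : G \in unitmx.
  rewrite -row_free_unit; apply: inj_row_free => u Hu.
  have H0 : dotv (Q *m u^T) (A *m (Q *m u^T)) = 0.
    rewrite /dotv trmx_mul trmxK.
    have -> : u *m Q^T *m (A *m (Q *m u^T)) = u *m G *m u^T by rewrite -HG !mulmxA.
    by rewrite Hu mul0mx mxE.
  have w0 : Q *m u^T = 0.
    case: (eqVneq (Q *m u^T) 0) => // wn; have := Apos _ wn; by rewrite H0 ltxx.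
  apply: (can_inj (@trmxK _ _ _)); rewrite trmx0 -[u^T]mul1mx -QQ -mulmxA w0.
  by rewrite mulmx0.
have [K HK] : {K | C *m C^T = K} by exists (C *m C^T).
have Kunit : K \in unitmx.
  rewrite -row_free_unit; apply: inj_row_free => u Hu.
  have uC : u *m C = 0.
    apply: sqsum0; rewrite trmx_mul !mulmxA -(mulmxA u C) HK Hu.
    by rewrite mul0mx mxE.
  by rewrite -[u]mulmx1 -CD mulmxA uC mul0mx.
have KT : K^T = K by rewrite -HK trmx_mul trmxK.
have [E HE] : {E | C^T *m invmx K = E} by exists (C^T *m invmx K).
have CE : C *m E = 1%:M by rewrite -HE mulmxA HK (mulmxV Kunit).
have [S HS] : {S | C^T *m invmx K *m C = S} by exists (C^T *m invmx K *m C).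
have ST : S^T = S by rewrite -HS !trmx_mul trmxK trmx_inv KT mulmxA.
have HM : W^T *m A *m W = C^T *m G *m C by rewrite WQC trmx_mul -HG !mulmxA.
have ET : E^T = invmx K *m C by rewrite -HE trmx_mul trmx_inv KT trmxK.
have MY : C^T *m G *m C *m (E *m invmx G *m E^T) = S.
  rewrite !mulmxA -(mulmxA _ C E) CE mulmx1 -(mulmxA _ G) (mulmxV Gunit).
  by rewrite mulmx1 ET mulmxA.
have YM : (E *m invmx G *m E^T) *m (C^T *m G *m C) = S.
  rewrite !mulmxA -(mulmxA _ E^T C^T) -trmx_mul CE trmx1 mulmx1.
  by rewrite -(mulmxA _ (invmx G) G) (mulVmx Gunit) mulmx1 -HE.
have Hpen : penrose (W^T *m A *m W) (E *m invmx G *m E^T).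
  rewrite HM; split.
  - rewrite MY -HS !mulmxA -(mulmxA _ C C^T) HK.
    by rewrite -(mulmxA _ (invmx K) K) (mulVmx Kunit) mulmx1.
  - rewrite YM -HS !mulmxA -(mulmxA _ C E) CE mulmx1 -HE.
    by rewrite ?mulmxA.
  - by rewrite MY ST.
  - by rewrite YM ST.
have HZ : penrose (W^T *m A *m W) (pinv (W^T *m A *m W)).
  by apply: epsilon_spec; exists (E *m invmx G *m E^T).
move: HZ; set Z := pinv _ => HZ.
have [MZM _ _ _] := HZ.
rewrite HM in MZM.
have DtCt : D^T *m C^T = 1%:M by rewrite -trmx_mul CD trmx1.
have H1 : G *m (C *m Z *m C^T) *m G = G.
  have := congr1 (fun X => D^T *m X *m D) MZM; rewrite /= !mulmxA DtCt !mul1mx.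
  by rewrite -!(mulmxA _ C D) CD !mulmx1 => ->.
have CZC : C *m Z *m C^T = invmx G.
  have -> : C *m Z *m C^T = invmx G *m (G *m (C *m Z *m C^T) *m G) *m invmx G.
    rewrite !mulmxA (mulVmx Gunit) mul1mx -!mulmxA (mulmxV Gunit) mulmx1.
    by rewrite !mulmxA.
  by rewrite H1 (mulVmx Gunit) mul1mx.
have [P HP] : {P | Q *m invmx G *m Q^T = P} by exists (Q *m invmx G *m Q^T).
rewrite HP.
have WZW : W *m Z *m W^T = P.
  rewrite WQC trmx_mul mulmxA -(mulmxA Q C Z) -(mulmxA Q (C *m Z) C^T) CZC.
  by [].
have vS : v mu.+1 = P *m b.
  rewrite /v mixpS Wmat_mul // -/W.
  have HA := Hals k k1 mu; rewrite /= -/W -/Z in HA.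
  by rewrite HA !mulmxA WZW.
have [z Hz] : {z | C *m mixp p k mu mu = z} by exists (C *m mixp p k mu mu).
have vM : v mu = Q *m z.
  rewrite /v -{1}(@dfwith_self R _ _ (mixp p k mu) mu) Wmat_mul // -/W WQC -mulmxA.
  by rewrite Hz.
have PAQ : P *m A *m Q = Q.
  by rewrite -HP -!mulmxA (mulmxA Q^T A Q) HG (mulVmx Gunit) mulmx1.
have PT : P^T = P by rewrite -HP !trmx_mul trmxK trmx_inv GT mulmxA.
have PAP : P *m A *m P = P.
  have H := erefl (P *m A *m (Q *m invmx G *m Q^T)).
  by rewrite {2}HP !mulmxA PAQ HP in H.
have PAQz : P *m (A *m (Q *m z)) = Q *m z by rewrite !mulmxA PAQ.
rewrite vS /r vM /fq mulmxBr PAQz dotvBl !dotvBr.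
have e1 : dotv (A *m (P *m b)) (P *m b) = dotv b (P *m b).
  by rewrite !dotvMl AT PT !mulmxA PAP.
have e2 : dotv (A *m (Q *m z)) (Q *m z) = dotv z (G *m z).
  by rewrite !dotvMl AT !mulmxA HG.
have e4 : dotv (P *m b) (A *m (Q *m z)) = dotv b (Q *m z).
  by rewrite dotvMl PT !mulmxA PAQ.
have e6 : dotv (Q *m z) (A *m (Q *m z)) = dotv z (G *m z).
  by rewrite dotvMl !mulmxA HG.
rewrite e1 e2 e4 e6 (@dotvC R _ (P *m b)) (@dotvC R _ (Q *m z)) invfM.
move: (dotv b b)^-1 (dotv b (P *m b)) (dotv b (Q *m z)) (dotv z (G *m z)) => c x1 x2 x3.
by field.
Qed.
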